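(* Let $I\subset\mathbb{Z}$ be an interval and let $\vec r,\vec{\bar r}:I\to\mathbb{R}^3$ be two discrete centroaffine space curves. Then there exists $A\in GL(3,\mathbb{R})$ with $\vec r(k)=A\,\vec{\bar r}(k)$ for all $k\in I$ if and only if the two curves have the same first and second centroaffine curvatures and the same centroaffine torsions at all corresponding points where these are defined.
   Context: A discrete centroaffine space curve is a map $\vec r:I\to\mathbb{R}^3$ ($I\subset\mathbb{Z}$ an interval containing at least three consecutive integers) with $[\vec r_{k-1},\vec r_k,\vec r_{k+1}]\ne0$ whenever $k-1,k,k+1\in I$, where $\vec r_k=\vec r(k)$, $[\cdot,\cdot,\cdot]$ is the $3\times3$ determinant and $\vec t_k=\vec r_{k+1}-\vec r_k$. With $D_k=[\vec r_{k-1},\vec r_k,\vec r_{k+1}]$ $(=[\vec r_k,\vec t_{k-1},\vec t_k])$, the first and second centroaffine curvatures and the centroaffine torsion at $k$ (for $k-1,\dots,k+2\in I$) are $\kappa_k=\frac{[\vec r_k,\vec r_{k+1},\vec r_{k+2}]}{D_k}$, $\bar\kappa_k=\frac{[\vec r_{k+1},\vec t_{k-1},\vec t_{k+1}]}{D_k}$, $\tau_k=\frac{[\vec t_{k-1},\vec t_k,\vec t_{k+1}]}{D_k}$. *)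

(* Defs.v *)
From HB Require Import structures.
From mathcomp Require Import all_boot all_order all_algebra.
Set Implicit Arguments. Unset Strict Implicit. Unset Printing Implicit Defensive.
Import Order.TTheory GRing.Theory Num.Theory.
Local Open Scope ring_scope.

Definition mx3 (R : realFieldType) (u v w : 'cV[R]_3) : 'M[R]_3 :=
  \matrix_(i < 3, j < 3)
    match nat_of_ord j with 0%N => u i 0 | 1%N => v i 0 | _ => w i 0 end.

Definition det3 (R : realFieldType) (u v w : 'cV[R]_3) : R := \det (mx3 u v w).

Definition is_interval (I : int -> Prop) : Prop :=
  forall a b c : int, I a -> I c -> a <= b -> b <= c -> I b.

Definition discrete_centroaffine_curve (R : realFieldType) (I : int -> Prop)
  (r : int -> 'cV[R]_3) : Prop :=
  is_interval I /\ (exists k : int, I (k - 1) /\ I k /\ I (k + 1)) /\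
  (forall k : int, I (k - 1) -> I k -> I (k + 1) ->
     det3 (r (k - 1)) (r k) (r (k + 1)) != 0).

Definition tangent (R : realFieldType) (r : int -> 'cV[R]_3) (k : int) : 'cV[R]_3 :=
  r (k + 1) - r k.

Definition Dk (R : realFieldType) (r : int -> 'cV[R]_3) (k : int) : R :=
  det3 (r (k - 1)) (r k) (r (k + 1)).

Definition kappa (R : realFieldType) (r : int -> 'cV[R]_3) (k : int) : R :=
  det3 (r k) (r (k + 1)) (r (k + 2)) / Dk r k.

Definition kappabar (R : realFieldType) (r : int -> 'cV[R]_3) (k : int) : R :=
  det3 (r (k + 1)) (tangent r (k - 1)) (tangent r (k + 1)) / Dk r k.

Definition torsion (R : realFieldType) (r : int -> 'cV[R]_3) (k : int) : R :=
  det3 (tangent r (k - 1)) (tangent r k) (tangent r (k + 1)) / Dk r k.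

(* Main.v *)
Require Import Defs.
From HB Require Import structures.
From mathcomp Require Import all_boot all_order all_algebra ring zify.
Import Order.TTheory GRing.Theory Num.Theory.
Local Open Scope ring_scope.

Section S.
Variable R : realFieldType.
Definition co (u : 'cV[R]_3) (n : nat) : R := u (inord n) 0.

Lemma det3E (u v w : 'cV[R]_3) : det3 u v w =
  co u 0 * (co v 1 * co w 2 - co w 1 * co v 2)
 - co v 0 * (co u 1 * co w 2 - co w 1 * co u 2)
 + co w 0 * (co u 1 * co v 2 - co v 1 * co u 2).
Proof.
rewrite /det3.
pose g (n m : nat) := match m with 0%N => co u n | 1%N => co v n | _ => co w n end.
have -> : mx3 u v w = \matrix_(i < 3, j < 3) g (val i) (val j).
  apply/matrixP => i j; rewrite !mxE /g /co inord_val.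
  by case: j => [[|[|[|j]]] Hj].
rewrite (expand_det_col _ ord0) !big_ord_recr big_ord0 /cofactor /=.
rewrite !(expand_det_col _ ord0) !big_ord_recr big_ord0 /cofactor /=.
rewrite !big_ord0 !det_mx11 !mxE /= /g /bump /=.
rewrite !expr0 !expr1 !expr2; ring.
Qed.

Lemma cvE (u v : 'cV[R]_3) : (forall n : nat, (n < 3)%N -> co u n = co v n) -> u = v.
Proof.
move=> H; apply/matrixP => i j; rewrite (ord1 j) -[i]inord_val.
by case: i => [[|[|[|i]]] Hi] //=; apply: H.
Qed.

Lemma coD (u v : 'cV[R]_3) n : co (u + v) n = co u n + co v n.
Proof. by rewrite /co mxE. Qed.
Lemma coN (u : 'cV[R]_3) n : co (- u) n = - co u n.
Proof. by rewrite /co mxE. Qed.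
Lemma coZ a (u : 'cV[R]_3) n : co (a *: u) n = a * co u n.
Proof. by rewrite /co mxE. Qed.

Lemma rel (u v w x : 'cV[R]_3) : det3 u v w != 0 ->
  let D := det3 u v w in
  let a := det3 v w x / D in
  let b := - (det3 w (v - u) (x - w) / D) - a in
  let c := det3 (v - u) (w - v) (x - w) / D - a - b + 1 in
  x = a *: u + b *: v + c *: w.
Proof.
move=> HD D a b c; rewrite /c /b /a /D.
move: HD; rewrite !det3E !coD !coN => HD.
apply: cvE => -[|[|[|n]]] // _; rewrite !coD !coZ; field; exact: HD.
Qed.

Lemma mx3_mul (A : 'M[R]_3) u v w : mx3 (A *m u) (A *m v) (A *m w) = A *m mx3 u v w.
Proof.
apply/matrixP => i j; rewrite !mxE.
by case: j => [[|[|[|j]]] Hj] //=; apply: eq_bigr => k _; rewrite mxE.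
Qed.

Lemma det3_mul (A : 'M[R]_3) u v w :
  det3 (A *m u) (A *m v) (A *m w) = \det A * det3 u v w.
Proof. by rewrite /det3 mx3_mul det_mulmx. Qed.

Lemma mx3_inj u v w u' v' w' : mx3 u v w = mx3 u' v' w' :> 'M[R]_3 ->
  [/\ u = u', v = v' & w = w'].
Proof.
move=> H; split; apply/matrixP => i j; rewrite (ord1 j).
- by have := congr1 (fun M : 'M[R]_3 => M i 0) H; rewrite !mxE.
- by have := congr1 (fun M : 'M[R]_3 => M i 1) H; rewrite !mxE.
- by have := congr1 (fun M : 'M[R]_3 => M i 2) H; rewrite !mxE.
Qed.

Lemma solve_u (x u v w : 'cV[R]_3) a b c : x = a *: u + b *: v + c *: w -> a != 0 ->
  u = a^-1 *: (x - b *: v - c *: w).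
Proof.
move=> -> ha; apply: cvE => -[|[|[|n]]] // _; rewrite !(coD, coN, coZ); field; exact: ha.
Qed.

Lemma relQ (r : int -> 'cV[R]_3) j :
  Dk r (j + 1) != 0 -> Dk r (j + 2) != 0 ->
  let a := kappa r (j + 1) in
  let b := - kappabar r (j + 1) - a in
  let c := torsion r (j + 1) - a - b + 1 in
  r (j + 3) = a *: r j + b *: r (j + 1) + c *: r (j + 2) /\ a != 0.
Proof.
have e1 : j + 1 - 1 = j by lia.
have e2 : j + 1 + 1 = j + 2 by lia.
have e3 : j + 1 + 2 = j + 3 by lia.
have e4 : j + 2 + 1 = j + 3 by lia.
have e5 : j + 2 - 1 = j + 1 by lia.
have e6 : j + 1 - 1 + 1 = j + 1 by lia.
move=> H1 H2 a b c; rewrite /c /b /a /kappa /kappabar /torsion /tangent /Dk e6 e1 e2 e3 e4.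
move: H1 H2; rewrite /Dk e5 e1 e2 e4 => H1 H2.
split; last by rewrite mulf_neq0 // invr_eq0.
exact: (rel (r j) (r (j+1)) (r (j+2)) (r (j + 3)) H1).
Qed.
End S.
Arguments relQ {R r j}.
Arguments solve_u {R x u v w a b c}.

Theorem proposition4p3 (R : realFieldType) (I : int -> Prop)
  (r rb : int -> 'cV[R]_3) :
  discrete_centroaffine_curve I r ->
  discrete_centroaffine_curve I rb ->
  (exists A : 'M[R]_3, A \in unitmx /\ (forall k : int, I k -> r k = A *m rb k))
  <->
  (forall k : int, I (k - 1) -> I k -> I (k + 1) -> I (k + 2) ->
     [/\ kappa r k = kappa rb k, kappabar r k = kappabar rb k
       & torsion r k = torsion rb k]).
Proof.
case=> HI [[k0 [a0 [b0 c0]]] Hdr] [_ [_ Hdb]].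
have itv : forall a b c, I a -> I c -> a <= b -> b <= c -> I b by exact: HI.
split.
  case=> A [HA Hr] k h1 h0 h2 h3.
  have dA : \det A != 0 by rewrite -unitfE -unitmxE.
  have e : k + 1 + 1 = k + 2 by lia.
  have e' : k - 1 + 1 = k by lia.
  rewrite /kappa /kappabar /torsion /Dk /tangent e e' !Hr // -!mulmxBr !det3_mul.
  by split; rewrite -mulf_div divff // mul1r.
move=> Hinv.
have DR : forall (s : int -> 'cV[R]_3) j,
    (forall k, I (k - 1) -> I k -> I (k + 1) -> det3 (s (k - 1)) (s k) (s (k + 1)) != 0) ->
    I j -> I (j + 1) -> I (j + 2) -> Dk s (j + 1) != 0.
  move=> s j Hs i0 i1 i2; rewrite /Dk; apply: Hs => //.
    by have -> : j + 1 - 1 = j by lia.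
  by have -> : j + 1 + 1 = j + 2 by lia.
have DR0 : forall (s : int -> 'cV[R]_3) j,
    (forall k, I (k - 1) -> I k -> I (k + 1) -> det3 (s (k - 1)) (s k) (s (k + 1)) != 0) ->
    I j -> I (j + 1) -> I (j + 2) -> det3 (s j) (s (j + 1)) (s (j + 2)) != 0.
  move=> s j Hs i0 i1 i2; have := DR s j Hs i0 i1 i2.
  rewrite /Dk (_ : j + 1 - 1 = j); last lia.
  by rewrite (_ : j + 1 + 1 = j + 2); last lia.
have [j0 [i0 [i1 i2]]] : exists j0, I j0 /\ I (j0 + 1) /\ I (j0 + 2).
  exists (k0 - 1); rewrite (_ : k0 - 1 + 1 = k0); last lia.
  by rewrite (_ : k0 - 1 + 2 = k0 + 1); last lia.
pose Mr := mx3 (r j0) (r (j0 + 1)) (r (j0 + 2)).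
pose Mb := mx3 (rb j0) (rb (j0 + 1)) (rb (j0 + 2)).
have uMr : Mr \in unitmx by rewrite unitmxE unitfE; exact: DR0.
have uMb : Mb \in unitmx by rewrite unitmxE unitfE; exact: DR0.
pose A := Mr *m invmx Mb.
exists A; split; first by rewrite unitmx_mul uMr unitmx_inv.
have AMb : A *m Mb = Mr by rewrite /A mulmxKV.
move: AMb; rewrite /Mb -mx3_mul => /mx3_inj [E0 E1 E2].
pose Q j := [/\ r j = A *m rb j, r (j + 1) = A *m rb (j + 1) & r (j + 2) = A *m rb (j + 2)].
have Q0 : Q j0 by split.
have REC : forall j, I j -> I (j + 1) -> I (j + 2) -> I (j + 3) ->
   exists a b c, a != 0 /\
   r (j + 3) = a *: r j + b *: r (j + 1) + c *: r (j + 2) /\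
   rb (j + 3) = a *: rb j + b *: rb (j + 1) + c *: rb (j + 2).
  move=> j h0 h1 h2 h3.
  have h2' : I (j + 1 + 1) by rewrite (_ : j + 1 + 1 = j + 2); last lia.
  have h0' : I (j + 1 - 1) by rewrite (_ : j + 1 - 1 = j); last lia.
  have h3' : I (j + 1 + 2) by rewrite (_ : j + 1 + 2 = j + 3); last lia.
  have [ek ekb et] := Hinv (j + 1) h0' h1 h2' h3'.
  have h1' : I (j + 2 + 1) by rewrite (_ : j + 2 + 1 = j + 3); last lia.
  have ej2 : j + 1 + 1 = j + 2 by lia.
  have dr2 := DR r (j + 1) Hdr h1 h2' h3'.
  have db2 := DR rb (j + 1) Hdb h1 h2' h3'.
  rewrite ej2 in dr2 db2.
  have [Rr ha] := relQ (DR r j Hdr h0 h1 h2) dr2.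
  have [Rb _] := relQ (DR rb j Hdb h0 h1 h2) db2.
  rewrite -ek -ekb -et in Rb.
  by do 3 eexists; split; [exact: ha | split; [exact: Rr | exact: Rb]].
have FW : forall j, I j -> I (j + 1) -> I (j + 2) -> I (j + 3) -> Q j -> Q (j + 1).
  move=> j h0 h1 h2 h3 [q0 q1 q2].
  have [a [b [c [ha [Rr Rb]]]]] := REC j h0 h1 h2 h3.
  rewrite /Q (_ : j + 1 + 1 = j + 2); last lia.
  rewrite (_ : j + 1 + 2 = j + 3); last lia.
  split => //; rewrite Rr Rb q0 q1 q2.
  by rewrite !mulmxDr !scalemxAr.
have BW : forall j, I j -> I (j + 1) -> I (j + 2) -> I (j + 3) -> Q (j + 1) -> Q j.
  move=> j h0 h1 h2 h3.
  rewrite /Q (_ : j + 1 + 1 = j + 2); last lia.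
  rewrite (_ : j + 1 + 2 = j + 3); last lia.
  move=> [q1 q2 q3]; split => //.
  have [a [b [c [ha [Rr Rb]]]]] := REC j h0 h1 h2 h3.
  rewrite (solve_u Rr ha) (solve_u Rb ha) q1 q2 q3.
  by rewrite -scalemxAr !mulmxBr -!scalemxAr.
have UP : forall n : nat, I (j0 + n%:Z + 2) -> Q (j0 + n%:Z).
  elim=> [|n IH] h; first by rewrite addr0.
  have -> : j0 + n.+1%:Z = j0 + n%:Z + 1 by lia.
  have h' : I (j0 + n%:Z + 2) by apply: (itv j0 _ (j0 + n.+1%:Z + 2)) => //; lia.
  apply: FW; last exact: IH.
  - by apply: (itv j0 _ (j0 + n.+1%:Z + 2)) => //; lia.
  - by apply: (itv j0 _ (j0 + n.+1%:Z + 2)) => //; lia.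
  - by apply: (itv j0 _ (j0 + n.+1%:Z + 2)) => //; lia.
  - by apply: (itv j0 _ (j0 + n.+1%:Z + 2)) => //; lia.
have DN : forall n : nat, I (j0 - n%:Z) -> Q (j0 - n%:Z).
  elim=> [|n IH] h; first by rewrite subr0.
  have h' : I (j0 - n%:Z) by apply: (itv (j0 - n.+1%:Z) _ (j0 + 2)) => //; lia.
  apply: BW.
  - by [].
  - by apply: (itv (j0 - n.+1%:Z) _ (j0 + 2)) => //; lia.
  - by apply: (itv (j0 - n.+1%:Z) _ (j0 + 2)) => //; lia.
  - by apply: (itv (j0 - n.+1%:Z) _ (j0 + 2)) => //; lia.
  - by rewrite (_ : j0 - n.+1%:Z + 1 = j0 - n%:Z); [exact: IH | lia].
move=> k hk.
have [hle|hgt] := lerP k j0.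
  have [n hn] : exists n : nat, k = j0 - n%:Z.
    exists (absz (j0 - k)%R); rewrite gez0_abs; [lia | lia].
  by rewrite hn in hk *; case: (DN n hk).
have [hle2|hgt2] := lerP (j0 + 2) k.
  have [n hn] : exists n : nat, k = j0 + n%:Z + 2.
    exists (absz (k - j0 - 2)%R); rewrite gez0_abs; [lia | lia].
  by rewrite hn in hk *; case: (UP n hk).
have -> : k = j0 + 1 by lia.
by [].
Qed.
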